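(* Let $d,n\in\mathbb N$ with $n\ge2$, $A\in\mathbb R^{d\times d}$, $V=I_d$, and let $f$ be self-attention with parameters $(A,V)$. Let $\gamma$ be a real eigenvalue of $A$ and $u\in\mathbb R^d$ an associated unit eigenvector. (1) If $\gamma\ge0$, let $X:=(u,\tfrac u2,\dots,\tfrac u2)\in(\mathbb R^d)^n$. Then for every $R>0$, $$\|D_{RX}f\|_2\ge\frac{\sqrt{n-1}}{1+(n-1)e^{-R^2\gamma/4}}.$$ (2) If $\gamma<0$, let $X:=(u,-u,\dots,-u)\in(\mathbb R^d)^n$. Then for every $R>0$, $$\|D_{RX}f\|_2\ge\frac{\sqrt{n-1}}{1+(n-1)e^{-2R^2|\gamma|}}.$$
   Context: For $X=(x_1,\dots,x_n)\in(\mathbb R^d)^n$, $f(X)=\big(V\sum_{j=1}^nP_{ij}x_j\big)_{1\le i\le n}$ with $P_{ij}=\exp(x_i^\top A^\top x_j)/\sum_{l=1}^n\exp(x_i^\top A^\top x_l)$. $D_Xf$ is the differential of $f$ at $X$, and $\|D_Xf\|_2$ is its operator norm when $(\mathbb R^d)^n$ is equipped with the Frobenius norm $\|X\|_F=(\sum_i|x_i|^2)^{1/2}$ on both input and output. $RX$ denotes $(Rx_1,\dots,Rx_n)$. *)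

(* Defs.v *)
From HB Require Import structures.
From mathcomp Require Import all_boot all_order all_algebra.
From mathcomp Require Import all_classical all_reals all_analysis.
Set Implicit Arguments. Unset Strict Implicit. Unset Printing Implicit Defensive.
Import Order.TTheory GRing.Theory Num.Theory.
Import numFieldNormedType.Exports.
Local Open Scope classical_set_scope.
Local Open Scope ring_scope.

(* A point X = (x_1,...,x_n) of (R^d)^n is an n x d matrix whose i-th row is x_i^T. *)

Definition att_score (K : realType) (n d : nat) (A : 'M[K]_d) (X : 'M[K]_(n, d))
  (i j : 'I_n) : K :=
  (row i X *m A^T *m (row j X)^T) 0 0.

Definition att_P (K : realType) (n d : nat) (A : 'M[K]_d) (X : 'M[K]_(n, d))
  (i j : 'I_n) : K :=
  expR (att_score A X i j) / \sum_(l < n) expR (att_score A X i l).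

(* self-attention f(X)_i = V * sum_j P_ij x_j  (written on rows: (sum_j P_ij x_j^T) V^T) *)
Definition selfattn (K : realType) (n d : nat) (A V : 'M[K]_d) (X : 'M[K]_(n, d))
  : 'M[K]_(n, d) :=
  \matrix_(i < n) ((\sum_(j < n) att_P A X i j *: row j X) *m V^T).

Definition frob (K : realType) (m p : nat) (M : 'M[K]_(m, p)) : K :=
  Num.sqrt (\sum_(i < m) \sum_(k < p) M i k ^+ 2).

Definition opnorm_F (K : realType) (m p : nat) (L : 'M[K]_(m, p) -> 'M[K]_(m, p)) : K :=
  sup [set frob (L H) | H in [set H : 'M[K]_(m, p) | frob H <= 1]].

Definition X_pos (K : realType) (n d : nat) (u : 'rV[K]_d) : 'M[K]_(n, d) :=
  \matrix_(i < n) (if (i : nat) == 0%N then u else 2^-1 *: u).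

Definition X_neg (K : realType) (n d : nat) (u : 'rV[K]_d) : 'M[K]_(n, d) :=
  \matrix_(i < n) (if (i : nat) == 0%N then u else - u).

(* Main.v *)
Require Import Defs.
From HB Require Import structures.
From mathcomp Require Import all_boot all_order all_algebra.
From mathcomp Require Import all_classical all_reals all_analysis.
From mathcomp Require Import ring lra.
Import Order.TTheory GRing.Theory Num.Theory.
Import numFieldNormedType.Exports.
Local Open Scope classical_set_scope.
Local Open Scope ring_scope.

Section S0.
Variables (K : realType) (n d : nat) (A : 'M[K]_d).

Lemma dsumf (V W : normedModType K) m (f : 'I_m -> V -> W) x :
  (forall i, differentiable (f i) x) -> differentiable (fun y => \sum_i f i y) x.
Proof.
move=> h; rewrite (_ : (fun y => _) = \sum_i f i); first exact: differentiable_sum.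
by apply/funext => y; rewrite fct_sumE.
Qed.

Lemma dmul (V : normedModType K) (f g : V -> K) x :
  differentiable f x -> differentiable g x -> differentiable (fun y => f y * g y) x.
Proof. exact: differentiableM. Qed.

Lemma dcoord (X : 'M[K]_(n, d)) i j : differentiable (fun Y : 'M[K]_(n,d) => Y i j) X.
Proof. exact: differentiable_coord. Qed.

Lemma score_sum (X : 'M[K]_(n, d)) i j :
  att_score A X i j = \sum_a \sum_b X i b * A a b * X j a.
Proof.
rewrite /att_score !mxE; apply: eq_bigr => a _; rewrite !mxE big_distrl /=.
by apply: eq_bigr => b _; rewrite !mxE.
Qed.

Lemma dscore (X : 'M[K]_(n, d)) i j : differentiable (fun Y => att_score A Y i j) X.
Proof.
rewrite (_ : (fun Y => _) = fun Y : 'M[K]_(n,d) => \sum_a \sum_b Y i b * A a b * Y j a); last first.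
  by apply/funext => Y; rewrite score_sum.
apply: dsumf => a; apply: dsumf => b; apply: dmul; last exact: dcoord.
apply: dmul; first exact: dcoord.
exact: differentiable_cst.
Qed.

Lemma dexpR (x : K) : differentiable (@expR K) x.
Proof. by apply/derivable1_diffP; exact: derivable_expR. Qed.

Lemma dexps (X : 'M[K]_(n, d)) i j : differentiable (fun Y => expR (att_score A Y i j)) X.
Proof. exact: (differentiable_comp (dscore X i j) (dexpR _)). Qed.

Lemma dP (X : 'M[K]_(n, d)) i j : differentiable (fun Y => att_P A Y i j) X.
Proof.
apply: dmul; first exact: dexps.
apply: differentiableV; first by apply: dsumf => l; exact: dexps.
rewrite gt_eqF // (bigD1 j) //=.
apply: (lt_le_trans (expR_gt0 (att_score A X i j))). rewrite lerDl sumr_ge0 // => l _; exact: expR_ge0.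
Qed.

Lemma selfattn_entry (X : 'M[K]_(n, d)) j k :
  selfattn A 1%:M X j k = \sum_l att_P A X j l * X l k.
Proof.
rewrite /selfattn !mxE (bigD1 k) //= [X in _ + X]big1; last first.
  by move=> j0 /negbTE jk; rewrite !mxE eq_sym jk mulr0.
rewrite !mxE eqxx mulr1 addr0 summxE; apply: eq_bigr => l _.
by rewrite !mxE.
Qed.

Lemma selfattnE (X : 'M[K]_(n, d)) :
  selfattn A 1%:M X = \sum_j \sum_k (\sum_l att_P A X j l * X l k) *: delta_mx j k.
Proof.
rewrite {1}[selfattn A 1%:M X]matrix_sum_delta; apply: eq_bigr => j _.
by apply: eq_bigr => k _; rewrite selfattn_entry.
Qed.

Lemma dself (X : 'M[K]_(n, d)) : differentiable (selfattn A 1%:M) X.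
Proof.
rewrite (_ : selfattn A 1%:M = fun Y => \sum_j \sum_k (\sum_l att_P A Y j l * Y l k) *: delta_mx j k); last by apply/funext => Y; rewrite selfattnE.
apply: dsumf => j. apply: dsumf => k; apply: differentiableZl.
apply: dsumf => l; apply: dmul; [exact: dP | exact: dcoord].
Qed.
End S0.

Section S1.
Variables (K : realType).

Lemma dlin (k r : K) : is_derive (0:K) 1 (fun t : K => k * (r + t)) k.
Proof.
have -> : (fun t : K => k * (r + t)) = k *: (cst r + id) by apply/funext.
apply: is_derive_eq.
by rewrite add0r; exact: mulr1.
Qed.

Lemma dE (k r : K) : is_derive (0:K) 1 (fun t => expR (k * (r + t))) (expR (k * r) * k).
Proof.
rewrite -[X in is_derive _ _ X _]/(expR \o (fun t => k * (r + t))).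
have := dlin k r => h.
apply: is_derive_eq.
by rewrite addr0.
Qed.
Lemma dg (k r b C : K) : 0 <= C ->
  is_derive (0:K) 1 (fun t => (expR (k * (r + t)) * (r + t) + C * b) * (expR (k * (r + t)) + C)^-1)
   (expR (k * r) / (expR (k * r) + C) + expR (k * r) * C * k * (r - b) / (expR (k * r) + C) ^+ 2).
Proof.
move=> C0.
have hE := dE k r.
have hN : is_derive (0:K) 1 (fun t => expR (k * (r + t)) * (r + t) + C * b)
   (expR (k * r) + r * (expR (k * r) * k)).
  rewrite -[X in is_derive _ _ X _]/((fun t => expR (k * (r + t))) * (fun t => r + t) + cst (C * b)).
  apply: is_derive_eq.
  by rewrite !addr0 /GRing.scale /= add0r !mulr1.
have S0 : expR (k * (r + 0)) + C != 0.
  by rewrite gt_eqF // ltr_wpDr // expR_gt0.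
have hD : is_derive (0:K) 1 (fun t => (expR (k * (r + t)) + C)^-1)
   (- (expR (k * (r + 0)) + C) ^- 2 *: (expR (k * r) * k)).
  apply: is_deriveV => //.
  rewrite -[X in is_derive _ _ X _]/((fun t => expR (k * (r + t))) + cst C).
  apply: is_derive_eq.
  by rewrite addr0.
rewrite -[X in is_derive _ _ X _]/((fun t => expR (k * (r + t)) * (r + t) + C * b) * (fun t => (expR (k * (r + t)) + C)^-1)).
apply: is_derive_eq.
rewrite !addr0 /GRing.scale /=.
move: S0; rewrite addr0; set E0 := expR (k * r) => S0.
field; exact: S0.
Qed.
End S1.

Section S2.
Variables (K : realType).

Lemma entry_le_norm p q (M : 'M[K]_(p, q)) i k : `|M i k| <= `|M|.
Proof.
by rewrite [leRHS]/Num.Def.normr /= mx_normrE; apply/bigmax_geP; right => /=; exists (i, k).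
Qed.

Lemma term_le_sum2 p q (F : 'I_p -> 'I_q -> K) i k :
  (forall i k, 0 <= F i k) -> F i k <= \sum_i \sum_k F i k.
Proof.
move=> F0; rewrite (bigD1 i) //= (bigD1 k) //= -addrA lerDl.
by rewrite addr_ge0 // sumr_ge0 // => *; rewrite ?sumr_ge0.
Qed.

Lemma frob_le1 p q (H : 'M[K]_(p, q)) : frob H <= 1 -> `|H| <= 1.
Proof.
move=> hH; rewrite [leLHS]/Num.Def.normr /= mx_normrE; apply: bigmax_le => // -[i k] _ /=.
have s0 : 0 <= \sum_(i < p) \sum_(k < q) H i k ^+ 2 by rewrite sumr_ge0 // => *; rewrite sumr_ge0 // => *; exact: sqr_ge0.
have h1 : \sum_(i < p) \sum_(k < q) H i k ^+ 2 <= 1.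
  move: hH; rewrite /frob => hH.
  have e := sqr_sqrtr s0; have e2 := sqrtr_ge0 (\sum_(i < p) \sum_(k < q) H i k ^+ 2); nra.
have h2 := @term_le_sum2 p q (fun i k => H i k ^+ 2) i k (fun _ _ => sqr_ge0 _).
have h3 := real_normK (num_real (H i k)).
have h4 := normr_ge0 (H i k).
move: h2 => /= h2.
nra.
Qed.

Lemma opnorm_ge p q (L : {linear 'M[K]_(p, q) -> 'M[K]_(p, q)}) H :
  continuous L -> frob H <= 1 -> frob (L H) <= opnorm_F L.
Proof.
move=> cL hH; have [k k0 hk] := linear_lipschitz cL.
apply: ub_le_sup; last by exists H.
exists (Num.sqrt (\sum_(i < p) \sum_(j < q) k ^+ 2)) => _ [H' hH' <-].
rewrite /frob ler_sqrt; last by rewrite sumr_ge0 // => *; rewrite sumr_ge0 // => *; exact: sqr_ge0.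
apply: ler_sum => i _; apply: ler_sum => j _.
have e1 := @entry_le_norm p q (L H') i j.
have e2 := hk H'.
have e3 := @frob_le1 p q H' hH'.
have e4 := normr_ge0 (L H' i j).
have e5 := normr_ge0 H'.
have e6 : k * `|H'| <= k by rewrite -[leRHS]mulr1 ler_wpM2l // ltW.
have e7 : `|L H' i j| <= k by apply: (le_trans e1); apply: (le_trans e2).
rewrite -(real_normK (num_real _)); nra.
Qed.
End S2.

Section S3.
Variables (K : realType).

Lemma derive_line (V W : normedModType K) (f : V -> W) a v :
  'D_v f a = 'D_1 (fun t : K => f (a + t *: v)) 0.
Proof.
rewrite /derive; congr lim.
have -> : (fun h : K => h^-1 *: ((f \o shift a) (h *: v) - f a)) =
  (fun h : K => h^-1 *: (((fun t : K => f (a + t *: v)) \o shift 0) h%:A - f (a + 0 *: v))).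
  apply/funext => h /=.
  rewrite scale0r !addr0 (_ : h%:A = h) ?(addrC a) //.
  by rewrite /GRing.scale /= mulr1.
by [].
Qed.

Lemma derive_sumZ (W : normedModType K) p (g : 'I_p -> K -> K) (M : 'I_p -> W) :
  (forall j, derivable (g j) 0 1) ->
  'D_1 (fun t => \sum_j g j t *: M j) 0 = \sum_j 'D_1 (g j) 0 *: M j.
Proof.
move=> hg.
have dZ j : differentiable (fun t => g j t *: M j) (0:K).
  by apply: differentiableZl; apply/derivable1_diffP.
rewrite (_ : (fun t => _) = \sum_j (fun t => g j t *: M j)); last first.
  by apply/funext => t; rewrite fct_sumE.
rewrite derive_sum; last by move=> j; apply: diff_derivable.
apply: eq_bigr => j _.
rewrite deriveE // diffZl; last by apply/derivable1_diffP.
by rewrite -deriveE //; apply/derivable1_diffP.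
Qed.
End S3.


Section Main.
Variables (K : realType) (m d : nat) (A : 'M[K]_d) (g : K) (u : 'rV[K]_d).
Hypotheses (hA : A *m u^T = g *: u^T) (hu : \sum_(k < d) u 0 k ^+ 2 = 1).

Lemma hAe a' : \sum_b A a' b * u 0 b = g * u 0 a'.
Proof.
have := congr1 (fun M : 'M[K]_(d, 1) => M a' 0) hA; rewrite !mxE => <-.
by apply: eq_bigr => b _; rewrite !mxE.
Qed.

Lemma score_span (a : 'I_m.+2 -> K) j l :
  att_score A (\matrix_(i, k) (a i * u 0 k)) j l = g * a j * a l.
Proof.
rewrite score_sum.
transitivity (\sum_a' (a j * a l * u 0 a') * \sum_b A a' b * u 0 b).
  apply: eq_bigr => a' _; rewrite big_distrr /=; apply: eq_bigr => b _.
  rewrite !mxE; ring.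
transitivity (g * a j * a l * \sum_a' u 0 a' ^+ 2); last by rewrite hu mulr1.
rewrite big_distrr /=; apply: eq_bigr => a' _; rewrite hAe; ring.
Qed.

Definition gfun (a : 'I_m.+2 -> K) j :=
  (\sum_l expR (g * a j * a l) * a l) / \sum_l expR (g * a j * a l).

Definition Mj (j : 'I_m.+2) : 'M[K]_(m.+2, d) := \matrix_(i, k) ((i == j)%:R * u 0 k).

Lemma attP_span (a : 'I_m.+2 -> K) i l :
  att_P A (\matrix_(i, k) (a i * u 0 k)) i l =
  expR (g * a i * a l) / \sum_l' expR (g * a i * a l').
Proof.
rewrite /att_P score_span; congr (_ / _); apply: eq_bigr => l' _.
by rewrite score_span.
Qed.

Lemma F_span (a : 'I_m.+2 -> K) :
  selfattn A 1%:M (\matrix_(i, k) (a i * u 0 k)) = \sum_j gfun a j *: Mj j.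
Proof.
apply/matrixP => i k.
rewrite selfattn_entry summxE [RHS](bigD1 i) //= [X in _ + X]big1; last first.
  by move=> j /negbTE ij; rewrite !mxE eq_sym ij mul0r mulr0.
rewrite !mxE eqxx mul1r addr0 /gfun.
under eq_bigr => l _ do rewrite attP_span mxE.
rewrite mulr_suml mulr_suml; apply: eq_bigr => l _; ring.
Qed.

Definition atc (c : 'I_m.+2 -> K) (t : K) (l : 'I_m.+2) := c l + t * (l == ord0)%:R.

Lemma line_eq c t :
  \matrix_(i, k) (c i * u 0 k) + t *: Mj ord0 = \matrix_(i, k) (atc c t i * u 0 k).
Proof. by apply/matrixP => i k; rewrite /Mj /atc !mxE; ring. Qed.

Lemma dadd (V : normedModType K) (f h : V -> K) x :
  differentiable f x -> differentiable h x -> differentiable (fun y => f y + h y) x.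
Proof. exact: differentiableD. Qed.

Lemma dpoly (c e x : K) : differentiable (fun t : K => c + t * e) x.
Proof.
apply: dadd; first exact: differentiable_cst.
apply: dmul; last exact: differentiable_cst.
exact: (@ex_diff _ _ _ _ _ _ _ (is_diff_id x)).
Qed.

Lemma sumexp_gt0 (F : 'I_m.+2 -> K) : 0 < \sum_l expR (F l).
Proof.
rewrite (bigD1 ord0) //=.
apply: (lt_le_trans (expR_gt0 (F ord0))); rewrite lerDl sumr_ge0 // => l _; exact: expR_ge0.

Qed.

Lemma dgfun c j x : differentiable (fun t => gfun (atc c t) j) x.
Proof.
have hs : forall l, differentiable (fun t => expR (g * atc c t j * atc c t l)) x.
  move=> l; apply: (differentiable_comp _ (@dexpR K _)).
  apply: dmul; last exact: dpoly.
  apply: dmul; [exact: differentiable_cst | exact: dpoly].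
apply: dmul.
  by apply: dsumf => l; apply: dmul; [exact: hs | exact: dpoly].
apply: differentiableV; first by apply: dsumf => l; exact: hs.
by rewrite gt_eqF // sumexp_gt0.
Qed.

Lemma gfun_ne0 c r b j : c ord0 = r -> (forall l, l != ord0 -> c l = b) -> j != ord0 ->
  (fun t => gfun (atc c t) j) = fun t =>
    (expR (g * b * (r + t)) * (r + t) + (expR (g * b * b) *+ m.+1) * b) *
    (expR (g * b * (r + t)) + expR (g * b * b) *+ m.+1)^-1.
Proof.
move=> c0 cb jn0; apply/funext => t.
have atj : atc c t j = b by rewrite /atc cb // (negbTE jn0) mulr0 addr0.
have at0 : atc c t ord0 = r + t by rewrite /atc c0 eqxx mulr1.
have atl (l : 'I_m.+1) : atc c t (lift ord0 l) = b.
  by rewrite /atc cb ?neq_lift // mulr0 addr0.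
have h1 : \sum_(l < m.+1) expR (g * atc c t j * atc c t (lift ord0 l)) * atc c t (lift ord0 l)
   = expR (g * b * b) *+ m.+1 * b.
  rewrite (eq_bigr (fun=> expR (g * b * b) * b)); last by move=> l _; rewrite atj atl.
  by rewrite sumr_const card_ord mulrnAl.
have h2 : \sum_(l < m.+1) expR (g * atc c t j * atc c t (lift ord0 l))
   = expR (g * b * b) *+ m.+1.
  rewrite (eq_bigr (fun=> expR (g * b * b))); last by move=> l _; rewrite atj atl.
  by rewrite sumr_const card_ord.
by rewrite /gfun big_ord_recl h1 big_ord_recl h2 atj at0.
Qed.

Lemma frob_Mj0 : frob (Mj ord0) = 1.
Proof.
rewrite /frob (bigD1 ord0) //= [X in _ + X]big1 ?addr0; last first.
  move=> i /negbTE i0; apply: big1 => k _; rewrite /Mj !mxE i0 mul0r.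
  by rewrite expr2 mulr0.
rewrite -[RHS]sqrtr1 -hu; congr Num.sqrt; apply: eq_bigr => k _.
by rewrite /Mj !mxE eqxx mul1r.
Qed.

Lemma sumMj_entry (D : 'I_m.+2 -> K) i k : (\sum_j D j *: Mj j) i k = D i * u 0 k.
Proof.
rewrite summxE (bigD1 i) //= [X in _ + X]big1 ?addr0; last first.
  by move=> j /negbTE ij; rewrite /Mj !mxE eq_sym ij mul0r mulr0.
by rewrite /Mj !mxE eqxx mul1r.
Qed.

Lemma key (c : 'I_m.+2 -> K) (r b : K) : c ord0 = r -> (forall l, l != ord0 -> c l = b) -> 0 <= g * b * (r - b) ->
  Num.sqrt (m.+2%:R - 1) / (1 + (m.+2%:R - 1) * expR (g * b * b - g * b * r))
   <= opnorm_F ('d (selfattn A 1%:M) (\matrix_(i, k) (c i * u 0 k))).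
Proof.
move=> c0 cb hpos.
set X := \matrix_(i, k) _.
have dF := @dself K m.+2 d A X.
have cL : continuous ('d (selfattn A 1%:M) X) := diff_continuous dF.
apply: le_trans (@opnorm_ge K m.+2 d _ (Mj ord0) cL _); last by rewrite frob_Mj0.
set D := fun j => 'D_1 (fun t => gfun (atc c t) j) 0.
have LE : 'd (selfattn A 1%:M) X (Mj ord0) = \sum_j D j *: Mj j.
  rewrite -deriveE // derive_line.
  rewrite (_ : (fun t => _) = fun t => \sum_j gfun (atc c t) j *: Mj j); last first.
    by apply/funext => t; rewrite /X line_eq F_span.
  rewrite derive_sumZ // => j; apply: diff_derivable; exact: dgfun.
rewrite LE.
set E0 := expR (g * b * r).
set C := expR (g * b * b) *+ m.+1.
have E0p : 0 < E0 by exact: expR_gt0.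
have C0 : 0 <= C by rewrite mulrn_wge0 // expR_ge0.
have Sp : 0 < E0 + C by rewrite ltr_wpDr.
have Dne j : j != ord0 ->
   D j = E0 / (E0 + C) + E0 * C * (g * b) * (r - b) / (E0 + C) ^+ 2.
  move=> jn; rewrite /D (gfun_ne0 _ _ _ _ c0 cb jn).
  by case: (@dg K (g * b) r b C C0).
set P := E0 / (E0 + C).
have P0 : 0 <= P by rewrite divr_ge0 // ltW.
have DP j : j != ord0 -> P <= D j.
  move=> jn; rewrite Dne // lerDl; apply: divr_ge0; last exact: sqr_ge0.
  by rewrite -mulrA mulr_ge0 // mulr_ge0 // ltW.
have hs : \sum_i \sum_k ((\sum_j D j *: Mj j) i k) ^+ 2 = \sum_i D i ^+ 2.
  apply: eq_bigr => i _.
  transitivity (D i ^+ 2 * \sum_k u 0 k ^+ 2); last by rewrite hu mulr1.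
  rewrite big_distrr /=; apply: eq_bigr => k _; rewrite sumMj_entry; ring.
rewrite /frob hs.
have e1 : (m.+2%:R - 1 : K) = m.+1%:R by rewrite mulrS addrC addrK.
have e2 : Num.sqrt (m.+2%:R - 1) / (1 + (m.+2%:R - 1) * expR (g * b * b - g * b * r))
   = Num.sqrt (m.+1%:R * P ^+ 2).
  rewrite sqrtrM ?ler0n // sqrtr_sqr ger0_norm // e1; congr (_ * _).
  rewrite /P /C expRB -/E0 -[expR (g * b * b) *+ m.+1]mulr_natl.
  have hm : 0 <= (1 + m%:R) * expR (g * b * b) :> K.
    by rewrite mulr_ge0 ?expR_ge0 // addr_ge0 ?ler0n.
  field; apply/andP; split; rewrite gt_eqF //; lra.
rewrite e2 ler_sqrt ?sumr_ge0 //; last by move=> i _; exact: sqr_ge0.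
rewrite big_ord_recl; apply: ler_wpDl; first exact: sqr_ge0.
have e3 : \sum_(l < m.+1) P ^+ 2 = m.+1%:R * P ^+ 2 by rewrite sumr_const card_ord mulr_natl.
rewrite -e3.
apply: ler_sum => l _.
have := DP (lift ord0 l) (neq_lift ord0 l).
nra.
Qed.
End Main.


Theorem mainTheorem3 (K : realType) (d n : nat) (A : 'M[K]_d) (gamma : K)
    (u : 'rV[K]_d) :
  (2 <= n)%N ->
  A *m u^T = gamma *: u^T ->
  \sum_(k < d) u 0 k ^+ 2 = 1 ->
  ((0 <= gamma) ->
     forall r : K, 0 < r ->
       Num.sqrt (n%:R - 1) / (1 + (n%:R - 1) * expR (- (r ^+ 2 * gamma / 4)))
         <= opnorm_F ('d (@selfattn K n d A 1%:M) (r *: X_pos n u)))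
  /\
  ((gamma < 0) ->
     forall r : K, 0 < r ->
       Num.sqrt (n%:R - 1) / (1 + (n%:R - 1) * expR (- (2 * r ^+ 2 * `|gamma|)))
         <= opnorm_F ('d (@selfattn K n d A 1%:M) (r *: X_neg n u))).
Proof.
case: n => [|[|m]] // _ hA hu.
have cb0 (l : 'I_m.+2) : l != ord0 -> ((l : nat) == 0%N) = false.
  by move=> /negbTE <-; rewrite -val_eqE.
split.
- move=> g0 r r0.
  pose c (i : 'I_m.+2) := if (i : nat) == 0%N then r else r / 2.
  have -> : r *: X_pos m.+2 u = \matrix_(i, k) (c i * u 0 k).
    apply/matrixP => i k; rewrite /c !mxE; case: ifP => _; rewrite ?mxE; ring.
  have -> : - (r ^+ 2 * gamma / 4) = gamma * (r / 2) * (r / 2) - gamma * (r / 2) * r.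
    by field.
  apply: (@key K m d A gamma u hA hu c r (r / 2)) => //.
    by move=> l /cb0; rewrite /c => ->.
  rewrite (_ : r - r / 2 = r / 2); last by field.
  by rewrite !mulr_ge0 // ?invr_ge0 ?ltW.
- move=> g0 r r0.
  pose c (i : 'I_m.+2) := if (i : nat) == 0%N then r else - r.
  have -> : r *: X_neg m.+2 u = \matrix_(i, k) (c i * u 0 k).
    apply/matrixP => i k; rewrite /c !mxE; case: ifP => _; rewrite ?mxE; ring.
  have -> : - (2 * r ^+ 2 * `|gamma|) = gamma * (- r) * (- r) - gamma * (- r) * r.
    by rewrite ltr0_norm //; ring.
  apply: (@key K m d A gamma u hA hu c r (- r)) => //.
    by move=> l /cb0; rewrite /c => ->.
  nra.
Qed.
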